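(* Let $(\sigma,\rho)$ and $(\nu,\varrho)$ be two $G$-compatible pairs. The lattices $L_{(\sigma,\rho)}=\sigma^{-1}\mathbb Z^n\rtimes_\eta\rho\mathbb Z^m$ and $L_{(\nu,\varrho)}=\nu^{-1}\mathbb Z^n\rtimes_\eta\varrho\mathbb Z^m$ are commensurable if and only if $$\left(\mathrm{rank}_{\mathbb Z}(\sigma^{-1}\mathbb Z^n\cap\nu^{-1}\mathbb Z^n),\ \mathrm{rank}_{\mathbb Z}(\rho\mathbb Z^m\cap\varrho\mathbb Z^m)\right)=(n,m).$$
   Context: Fix integers $1\le m\le n$. Let $\Delta_1,\dots,\Delta_m\in\mathbb R^{n\times n}$ be linearly independent, nonsingular, traceless diagonal matrices $\Delta_i=\mathrm{diag}(d_1^{(i)},\dots,d_n^{(i)})$ such that for each $i$, $d_k^{(i)}\neq d_j^{(i)}$ whenever $k\neq j$. For $t=(t_1,\dots,t_m)^T\in\mathbb R^m$ write $t\cdot\Delta=\sum_{i=1}^m t_i\Delta_i$ and $\eta(t)=e^{t\cdot\Delta}$. Let $G=\mathbb R^n\rtimes_\eta\mathbb R^m$ be the Lie group with underlying set $\mathbb R^n\times\mathbb R^m$ and multiplication $(x,t)(y,s)=(x+e^{t\cdot\Delta}y,\ t+s)$. A pair $(\sigma,\rho)\in GL_n(\mathbb R)\times GL_m(\mathbb R)$ is called $G$-compatible if $\sigma\exp(\rho^{(j)}\cdot\Delta)\sigma^{-1}\in SL_n(\mathbb Z)$ for all $j=1,\dots,m$, where $\rho^{(j)}$ is the $j$-th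 column of $\rho$. For such a pair, $\sigma^{-1}\mathbb Z^n\rtimes_\eta\rho\mathbb Z^m$ denotes the subgroup $\{(\sigma^{-1}v,\rho p): v\in\mathbb Z^n, p\in\mathbb Z^m\}$ of $G$, which is a lattice. Two lattices $\Gamma,\Gamma'$ in $G$ are commensurable if $[\Gamma:\Gamma\cap\Gamma']<\infty$ and $[\Gamma':\Gamma\cap\Gamma']<\infty$. *)

(* Defs.v *)
From HB Require Import structures.
From mathcomp Require Import all_boot all_order all_algebra.
From mathcomp Require Import all_classical all_reals all_analysis.
Set Implicit Arguments. Unset Strict Implicit. Unset Printing Implicit Defensive.
Import Order.TTheory GRing.Theory Num.Theory.
Local Open Scope ring_scope.
Local Open Scope classical_set_scope.

Section Defs.
Variable R : realType.

Definition Delta (n m : nat) (D : 'M[R]_(m, n)) (i : 'I_m) : 'M[R]_n :=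
  diag_mx (row i D).

Definition tDelta (n m : nat) (D : 'M[R]_(m, n)) (t : 'cV[R]_m) : 'M[R]_n :=
  \sum_(i < m) t i 0 *: Delta D i.

(* Exponential of a diagonal matrix: entrywise exponential on the diagonal
   (this is exactly the matrix exponential for a diagonal matrix). *)
Definition expdiag (n : nat) (A : 'M[R]_n) : 'M[R]_n :=
  diag_mx (\row_k expR (A k k)).

Definition eta (n m : nat) (D : 'M[R]_(m, n)) (t : 'cV[R]_m) : 'M[R]_n :=
  expdiag (tDelta D t).

Definition inSLZ (n : nat) (A : 'M[R]_n) : Prop :=
  (forall i j, A i j \is a Num.int) /\ \det A = 1.

Definition intcol (k : nat) (v : 'cV[R]_k) : Prop :=
  forall i, v i 0 \is a Num.int.

Definition compatible (n m : nat) (D : 'M[R]_(m, n))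
  (sigma : 'M[R]_n) (rho : 'M[R]_m) : Prop :=
  [/\ sigma \in unitmx, rho \in unitmx &
      forall j : 'I_m, inSLZ (sigma *m eta D (col j rho) *m invmx sigma)].

Definition Gmul (n m : nat) (D : 'M[R]_(m, n))
  (g h : 'cV[R]_n * 'cV[R]_m) : 'cV[R]_n * 'cV[R]_m :=
  (g.1 + eta D g.2 *m h.1, g.2 + h.2).

Definition latt (n m : nat) (sigma : 'M[R]_n) (rho : 'M[R]_m)
  : set ('cV[R]_n * 'cV[R]_m) :=
  [set g | exists v p, [/\ intcol v, intcol p & g = (invmx sigma *m v, rho *m p)]].

Definition finite_index (n m : nat) (D : 'M[R]_(m, n))
  (Gam H : set ('cV[R]_n * 'cV[R]_m)) : Prop :=
  exists s : seq ('cV[R]_n * 'cV[R]_m),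
    (forall h, h \in s -> Gam h) /\
    (forall g, Gam g -> exists2 h, h \in s & exists k, H k /\ g = Gmul D h k).

Definition commensurable (n m : nat) (D : 'M[R]_(m, n))
  (Gam Gam' : set ('cV[R]_n * 'cV[R]_m)) : Prop :=
  finite_index D Gam (Gam `&` Gam') /\ finite_index D Gam' (Gam `&` Gam').

Definition Zspan (k : nat) (A : 'M[R]_k) : set 'cV[R]_k :=
  [set w | exists v, intcol v /\ w = A *m v].

Definition Zindep (k r : nat) (f : 'I_r -> 'cV[R]_k) : Prop :=
  forall c : 'I_r -> int, \sum_(i < r) (c i)%:~R *: f i = 0 -> forall i, c i = 0.

Definition Zrank (k : nat) (S : set 'cV[R]_k) (r : nat) : Prop :=
  (exists f : 'I_r -> 'cV[R]_k, (forall i, S (f i)) /\ Zindep f) /\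
  (forall f : 'I_r.+1 -> 'cV[R]_k, (forall i, S (f i)) -> ~ Zindep f).

End Defs.

(* Main.v *)
Set Warnings "-all".
Require Import Defs.
From HB Require Import structures.
From mathcomp Require Import all_boot all_order all_algebra.
From mathcomp Require Import all_classical all_reals all_analysis.
From mathcomp Require Import ring lra zify.
Import Order.TTheory GRing.Theory Num.Theory.
Local Open Scope ring_scope.
Local Open Scope classical_set_scope.

Set Implicit Arguments. Unset Strict Implicit. Unset Printing Implicit Defensive.
Section Aux.
Variable R : realType.

Definition intmx (k l : nat) (A : 'M[R]_(k, l)) := forall i j, A i j \is a Num.int.

Lemma intcolP k (v : 'cV[R]_k) : intcol v <-> intmx v.
Proof. by split=> h i => [j|]; rewrite ?(ord1 j) h. Qed.

Lemma intmxM k l p (A : 'M[R]_(k, l)) (B : 'M[R]_(l, p)) :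
  intmx A -> intmx B -> intmx (A *m B).
Proof. by move=> hA hB i j; rewrite mxE rpred_sum // => t _; rewrite rpredM. Qed.

Lemma intmxD k l (A B : 'M[R]_(k, l)) : intmx A -> intmx B -> intmx (A + B).
Proof. by move=> hA hB i j; rewrite mxE rpredD. Qed.

Lemma intmxN k l (A : 'M[R]_(k, l)) : intmx A -> intmx (- A).
Proof. by move=> hA i j; rewrite mxE rpredN. Qed.

Lemma intmxZ k l (z : int) (A : 'M[R]_(k, l)) : intmx A -> intmx (z%:~R *: A).
Proof. by move=> hA i j; rewrite mxE rpredM // intr_int. Qed.

Lemma intmx1 k : intmx (1%:M : 'M[R]_k).
Proof. by move=> i j; rewrite mxE; case: (i == j). Qed.

Lemma intmx_map k l (A : 'M[R]_(k, l)) : intmx A ->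
  A = map_mx intr (map_mx (@Num.floor R) A).
Proof. by move=> hA; apply/matrixP=> i j; rewrite !mxE floorK. Qed.

Lemma intmx_det k (A : 'M[R]_k) : intmx A -> \det A \is a Num.int.
Proof.
move=> /intmx_map ->; rewrite (det_map_mx (GRing.RMorphism.clone _ _ intr _)).
exact: intr_int.
Qed.

Lemma intmx_adj k (A : 'M[R]_k) : intmx A -> intmx (\adj A).
Proof.
move=> /intmx_map ->; rewrite -(map_mx_adj (GRing.RMorphism.clone _ _ intr _)).
by move=> i j; rewrite mxE intr_int.
Qed.

Lemma intmx_inv k (A : 'M[R]_k) : intmx A -> \det A = 1 -> intmx (invmx A).
Proof.
move=> hA hd; rewrite /invmx unitmxE hd unitr1 invr1 scale1r.
exact: intmx_adj.
Qed.

End Aux.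

Section Dep.
Variable R : realType.

Definition ratmx k r (w : 'I_r -> 'cV[R]_k) : 'M[rat]_(r, k) :=
  \matrix_(i, j) ((Num.floor (w i j 0))%:~R : rat).

Lemma dep_int k r (w : 'I_r -> 'cV[R]_k) : (forall i, intcol (w i)) ->
  ~~ row_free (ratmx w) ->
  exists c : 'I_r -> int, (exists i, c i != 0) /\ \sum_(i < r) (c i)%:~R *: w i = 0.
Proof.
move=> hw; rewrite -kermx_eq0 => hk.
have [i hi] : exists i, row i (kermx (ratmx w)) != 0.
  apply/existsP; apply: contraR hk => /existsPn h; apply/eqP/row_matrixP => i.
  by rewrite row0; apply/eqP; move: (h i); rewrite negbK.
set u := row i _ in hi.
have hu : u *m ratmx w = 0 by rewrite /u -row_mul mulmx_ker row0.
have [j hj] : exists j, u 0 j != 0.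
  apply/existsP; apply: contraR hi => /existsPn h; apply/eqP/matrixP => a b.
  by rewrite (ord1 a); have := h b; rewrite negbK => /eqP ->; rewrite mxE.
pose Dq := \prod_(t < r) denq (u 0 t).
pose c l := numq (u 0 l) * \prod_(t < r | t != l) denq (u 0 t).
have hc l : (c l)%:~R = u 0 l * Dq%:~R :> rat.
  rewrite /c /Dq [in RHS](bigD1 l) //= !intrM.
  have hd : (denq (u 0 l))%:~R != 0 :> rat by rewrite intr_eq0 denq_neq0.
  move: (divq_num_den (u 0 l)) hd; set q := u 0 l; set N := numq q; set d := denq q.
  set P := (\prod_(_ < r | _) _)%:~R => <- hd.
  by field.
exists c; split.
  exists j; rewrite /c mulf_eq0 negb_or numq_eq0 hj /=.
  by rewrite prodf_seq_neq0; apply/allP => t _; apply/implyP => _; exact: denq_neq0.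
apply/matrixP => a b; rewrite (ord1 b) summxE mxE.
under eq_bigr do rewrite mxE.
have -> : \sum_(l < r) (c l)%:~R * w l a 0 = ratr (Dq%:~R * (u *m ratmx w) 0 a).
  rewrite mxE mulr_sumr rmorph_sum; apply: eq_bigr => l _.
  have e : w l a 0 = ratr (ratmx w l a) by rewrite mxE ratr_int floorK //; apply: hw.
  rewrite -(ratr_int R (c l)) hc e -rmorphM; congr ratr; ring.
by rewrite hu mxE mulr0 rmorph0.
Qed.

Lemma ratmx_map k r (w : 'I_r -> 'cV[R]_k) : (forall i, intcol (w i)) ->
  map_mx ratr (ratmx w) = \matrix_(i, j) w i j 0.
Proof. by move=> hw; apply/matrixP=> i j; rewrite !mxE ratr_int floorK //; apply: hw. Qed.

Lemma dep_big k (w : 'I_k.+1 -> 'cV[R]_k) : (forall i, intcol (w i)) ->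
  exists c : 'I_k.+1 -> int, (exists i, c i != 0) /\ \sum_(i < k.+1) (c i)%:~R *: w i = 0.
Proof.
move=> hw; apply: dep_int => //; rewrite /row_free.
by apply: contraTN isT => /eqP h; have := rank_leq_col (ratmx w); rewrite h ltnn.
Qed.

Lemma dep_det k (w : 'I_k -> 'cV[R]_k) : (forall i, intcol (w i)) ->
  \det (\matrix_(i, j) w i j 0) = 0 ->
  exists c : 'I_k -> int, (exists i, c i != 0) /\ \sum_(i < k) (c i)%:~R *: w i = 0.
Proof.
move=> hw hd; apply: dep_int => //; rewrite row_free_unit unitmxE unitfE negbK.
move: hd; rewrite -(ratmx_map hw) (det_map_mx (GRing.RMorphism.clone _ _ ratr _)).
by move/eqP; rewrite fmorph_eq0.
Qed.

End Dep.

Section Span.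
Variable R : realType.

Lemma ZspanD k (A : 'M[R]_k) x y : Zspan A x -> Zspan A y -> Zspan A (x + y).
Proof.
move=> [v [hv ->]] [u [hu ->]]; exists (v + u); split; last by rewrite mulmxDr.
by move=> i; rewrite mxE rpredD.
Qed.

Lemma Zspan0 k (A : 'M[R]_k) : Zspan A 0.
Proof. by exists 0; split; [move=> i; rewrite mxE | rewrite mulmx0]. Qed.

Lemma ZspanN k (A : 'M[R]_k) x : Zspan A x -> Zspan A (- x).
Proof.
move=> [v [hv ->]]; exists (- v); split; last by rewrite mulmxN.
by move=> i; rewrite mxE rpredN.
Qed.

Lemma ZspanZ k (A : 'M[R]_k) (z : int) x : Zspan A x -> Zspan A (z%:~R *: x).
Proof.
move=> [v [hv ->]]; exists (z%:~R *: v); split; last by rewrite scalemxAr.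
by move=> i; rewrite mxE rpredM // intr_int.
Qed.

Lemma Zspan_sum k (A : 'M[R]_k) r (c : 'I_r -> int) (f : 'I_r -> 'cV[R]_k) :
  (forall i, Zspan A (f i)) -> Zspan A (\sum_(i < r) (c i)%:~R *: f i).
Proof.
move=> hf; apply: (big_ind (Zspan A)); [exact: Zspan0 | exact: ZspanD |].
by move=> i _; apply: ZspanZ.
Qed.

Lemma Zspan_int k (A : 'M[R]_k) x : intcol x -> Zspan A (A *m x).
Proof. by move=> hx; exists x. Qed.

Lemma sum_mul k r (A : 'M[R]_k) (c : 'I_r -> R) (w : 'I_r -> 'cV[R]_k) :
  \sum_(i < r) c i *: (A *m w i) = A *m \sum_(i < r) c i *: w i.
Proof. by rewrite mulmx_sumr; apply: eq_bigr => i _; rewrite scalemxAr. Qed.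

Lemma nodep k (A : 'M[R]_k) (f : 'I_k.+1 -> 'cV[R]_k) :
  (forall i, Zspan A (f i)) -> ~ Zindep f.
Proof.
move=> hf hind; have [w hw] := boolp.choice hf.
have [c [[i ci] hc]] := dep_big (fun i => proj1 (hw i)).
have : \sum_(i < k.+1) (c i)%:~R *: f i = 0.
  under eq_bigr do rewrite (proj2 (hw _)).
  by rewrite sum_mul hc mulmx0.
by move/hind/(_ i)/eqP; rewrite (negbTE ci).
Qed.

Lemma full k (A B : 'M[R]_k) (f : 'I_k -> 'cV[R]_k) :
  (forall i, (Zspan A `&` Zspan B) (f i)) -> Zindep f ->
  exists N : nat, (0 < N)%N /\
    forall x, intcol x -> (Zspan A `&` Zspan B) (N%:R *: (A *m x)).
Proof.
move=> hf hind; have [w hw] := boolp.choice (fun i => proj1 (hf i)).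
have wi i : intcol (w i) := proj1 (hw i).
have fe i : f i = A *m w i := proj2 (hw i).
pose W := \matrix_(i, j) w i j 0 : 'M[R]_k.
have hW : intmx W by move=> i j; rewrite mxE; apply: wi.
pose d := \det W.
have dint : d \is a Num.int by apply: intmx_det.
have d0 : d != 0.
  apply/eqP => /(dep_det wi) [c [[i ci] hc]].
  have : \sum_(i < k) (c i)%:~R *: f i = 0.
    under eq_bigr do rewrite fe.
    by rewrite sum_mul hc mulmx0.
  by move/hind/(_ i)/eqP; rewrite (negbTE ci).
have dn : d ^+ 2 \is a Num.nat by apply: natr_exp_even.
exists (Num.trunc (d ^+ 2)).
have eN : (Num.trunc (d ^+ 2))%:R = d ^+ 2 by apply/eqP; rewrite -natrEtruncn.
split.
  by rewrite lt0n -(eqr_nat R) eN expf_eq0 negb_and d0 orbT.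
move=> x hx; rewrite eN.
pose y := (\adj W)^T *m x.
have yi : intmx y.
  apply: intmxM; last by apply/intcolP.
  by move=> i j; rewrite mxE; apply: intmx_adj.
pose c i := Num.floor d * Num.floor (y i 0).
have ce i : (c i)%:~R = d * y i 0 by rewrite intrM !floorK.
have key : \sum_(i < k) (c i)%:~R *: f i = d ^+ 2 *: (A *m x).
  under eq_bigr do rewrite ce -scalerA fe.
  rewrite -scaler_sumr sum_mul.
  have -> : \sum_(i < k) y i 0 *: w i = W^T *m y.
    apply/matrixP => a b; rewrite (ord1 b) summxE !mxE.
    by apply: eq_bigr => i _; rewrite !mxE mulrC.
  rewrite /y [W^T *m _]mulmxA -trmx_mul mul_adj_mx tr_scalar_mx mul_scalar_mx.
  by rewrite -scalemxAr scalerA expr2.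
rewrite -key; split; apply: Zspan_sum => i; [exact: (proj1 (hf i)) | exact: (proj2 (hf i))].
Qed.

End Span.

Section Eta.
Variable R : realType.
Variables (n m : nat) (D : 'M[R]_(m, n)).

Lemma tDeltaD a b : tDelta D (a + b) = tDelta D a + tDelta D b.
Proof. by rewrite /tDelta -big_split; apply: eq_bigr => i _; rewrite mxE scalerDl. Qed.

Lemma tDelta0 : tDelta D 0 = 0.
Proof. by rewrite /tDelta big1 // => i _; rewrite mxE scale0r. Qed.

Lemma etaD a b : Defs.eta D (a + b) = Defs.eta D a *m Defs.eta D b.
Proof.
rewrite /Defs.eta tDeltaD /expdiag mulmx_diag; congr diag_mx.
by apply/matrixP => i j; rewrite !mxE expRD.
Qed.

Lemma eta0 : Defs.eta D 0 = 1%:M.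
Proof.
rewrite /Defs.eta tDelta0 /expdiag -diag_const_mx; congr diag_mx.
by apply/matrixP => i j; rewrite !mxE expR0.
Qed.

Definition cnj (s : 'M[R]_n) t := s *m Defs.eta D t *m invmx s.

Lemma cnjD s a b : s \in unitmx -> cnj s (a + b) = cnj s a *m cnj s b.
Proof.
move=> hs; rewrite /cnj etaD !mulmxA; congr (_ *m _).
by rewrite -[s *m _ *m _ *m s]mulmxA mulVmx // mulmx1.
Qed.

Lemma cnj0 s : s \in unitmx -> cnj s 0 = 1%:M.
Proof. by move=> hs; rewrite /cnj eta0 mulmx1 mulmxV. Qed.

Definition Pc s t := intmx (cnj s t) /\ intmx (cnj s (- t)).

Lemma Pc0 s : s \in unitmx -> Pc s 0.
Proof. by move=> hs; rewrite /Pc oppr0 cnj0 //; split; apply: intmx1. Qed.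

Lemma PcD s a b : s \in unitmx -> Pc s a -> Pc s b -> Pc s (a + b).
Proof.
move=> hs [h1 h2] [h3 h4]; split; first by rewrite cnjD //; apply: intmxM.
have e : cnj s (- (a + b)) = cnj s (- a) *m cnj s (- b) by rewrite opprD cnjD.
by rewrite e; apply: intmxM.
Qed.

Lemma PcN s a : Pc s a -> Pc s (- a).
Proof. by move=> [h1 h2]; split; rewrite ?opprK. Qed.

Lemma Pcz s a (z : int) : s \in unitmx -> Pc s a -> Pc s (z%:~R *: a).
Proof.
move=> hs ha; rewrite scaler_int.
have hn k : Pc s (a *+ k).
  elim: k => [|k ih]; first by rewrite mulr0n; apply: Pc0.
  by rewrite mulrS; apply: PcD.
case: z => k; first exact: hn.
by rewrite NegzE mulrNz; apply: PcN; apply: hn.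
Qed.

Lemma mul_cols k (r : 'M[R]_k) (p : 'cV[R]_k) :
  r *m p = \sum_(j < k) p j 0 *: col j r.
Proof.
apply/matrixP => a b; rewrite (ord1 b) summxE !mxE.
by apply: eq_bigr => j _; rewrite !mxE mulrC.
Qed.

Lemma conj_int s r p : compatible D s r -> intcol p -> Pc s (r *m p).
Proof.
move=> [hs hr hc] hp; rewrite mul_cols.
apply: (big_ind (Pc s)); [exact: Pc0 | by move=> x y; apply: PcD |].
move=> j _; rewrite -(floorK (hp j)); apply: Pcz => //.
have [hi hd] := hc j; split; first exact: hi.
have e : cnj s (col j r) *m cnj s (- col j r) = 1%:M by rewrite -cnjD // subrr cnj0.
have hu : cnj s (col j r) \in unitmx by rewrite unitmxE /cnj hd unitr1.
have -> : cnj s (- col j r) = invmx (cnj s (col j r)).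
  by rewrite -[LHS](mulKmx hu) e mulmx1.
by apply: intmx_inv.
Qed.

Lemma eta_pres s r t x : compatible D s r -> Zspan r t ->
  Zspan (invmx s) x -> Zspan (invmx s) (Defs.eta D t *m x).
Proof.
move=> hc [p [hp ->]] [v [hv ->]]; have hs : s \in unitmx by case: hc.
exists (cnj s (r *m p) *m v); split.
  by apply/intcolP; apply: intmxM; [case: (conj_int hc hp) | apply/intcolP].
by rewrite /cnj !mulmxA mulVmx // mul1mx.
Qed.

End Eta.

Section Main.
Variable R : realType.

Lemma lattE n m (s : 'M[R]_n) (r : 'M[R]_m) g :
  latt s r g <-> Zspan (invmx s) g.1 /\ Zspan r g.2.
Proof.
split.
  by move=> [v [p [hv hp ->]]]; split; [exists v | exists p].
case: g => g1 g2 /= [[v [hv ->]] [p [hp ->]]]; by exists v, p.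
Qed.

Lemma pigeon (T : eqType) (s : seq T) (P : nat -> T -> Prop) :
  (forall a, exists2 h, h \in s & P a h) ->
  exists a b, (a < b)%N /\ exists h, P a h /\ P b h.
Proof.
case: s => [|x0 s'] hP; first by case: (hP 0%N).
set s := x0 :: s' in hP *.
have hF : forall a : 'I_(size s).+1, exists i : 'I_(size s), P a (nth x0 s i).
  move=> a; have [h hs ha] := hP a.
  by exists (Ordinal (etrans (index_mem h s) hs)); rewrite /= nth_index.
have [F hF'] := boolp.choice hF.
have : ~~ injectiveb F.
  apply/negP => /injectiveP /leq_card; by rewrite !card_ord ltnn.
move=> /injectivePn [a [b ab eF]].
have hab : (a : nat) != b by [].
case: (ltngtP a b) => [lt|gt|eq]; last by rewrite eq eqxx in hab.
  by exists a, b; split => //; exists (nth x0 s (F a)); split => //; rewrite eF.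
by exists b, a; split => //; exists (nth x0 s (F a)); split => //; rewrite eF.
Qed.

Lemma sum_delta k (x : 'I_k -> R) j :
  (\sum_(i < k) x i *: (delta_mx i 0 : 'cV[R]_k)) j 0 = x j.
Proof.
rewrite summxE (bigD1 j) //= big1 ?addr0; first by rewrite !mxE !eqxx mulr1.
by move=> i hi; rewrite !mxE eq_sym (negbTE hi) mulr0.
Qed.

Lemma indep_basis k (A : 'M[R]_k) (N : 'I_k -> nat) : A \in unitmx ->
  (forall j, (0 < N j)%N) ->
  Zindep (fun j => (N j)%:R *: (A *m delta_mx j 0)).
Proof.
move=> hA hN c hc j.
have : \sum_(i < k) ((c i)%:~R * (N i)%:R) *: (delta_mx i 0 : 'cV[R]_k) = 0.
  apply: (can_inj (mulKmx hA)); rewrite mulmx0 -sum_mul -[RHS]hc.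
  by apply: eq_bigr => i _; rewrite -scalerA.
move/(congr1 (fun M : 'cV[R]_k => M j 0)); rewrite sum_delta mxE.
move/eqP; rewrite mulf_eq0 pnatr_eq0 intr_eq0 => /orP [/eqP //|].
by rewrite eqn0Ngt hN.
Qed.

Lemma rank_of k (A : 'M[R]_k) (S : set 'cV[R]_k) : A \in unitmx ->
  (forall x, S x -> Zspan A x) ->
  (forall j : 'I_k, exists N : nat, (0 < N)%N /\ S (N%:R *: (A *m delta_mx j 0))) ->
  Zrank S k.
Proof.
move=> hA hS hN; split; last by move=> f hf; apply: nodep => i; apply: hS.
have [N hN'] := boolp.choice hN.
exists (fun j => (N j)%:R *: (A *m delta_mx j 0)); split.
  by move=> i; case: (hN' i).
by apply: indep_basis => // j; case: (hN' j).
Qed.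

End Main.

Section Fwd.
Variable R : realType.

Lemma intcol_delta k (a : nat) (j : 'I_k) : intcol (a%:R *: (delta_mx j 0 : 'cV[R]_k)).
Proof. by move=> i; rewrite !mxE; case: (i == j); rewrite ?mulr1 ?mulr0 // natr_int. Qed.

Lemma fwd n m (D : 'M[R]_(m, n)) s nu r vr :
  compatible D s r -> compatible D nu vr ->
  finite_index D (latt s r) (latt s r `&` latt nu vr) ->
  Zrank (Zspan (invmx s) `&` Zspan (invmx nu)) n /\ Zrank (Zspan r `&` Zspan vr) m.
Proof.
move=> h1 h2 [sq [hs hcov]].
have hsu : s \in unitmx by case: h1.
have hru : r \in unitmx by case: h1.
split.
  apply: (rank_of (A := invmx s)); [by rewrite unitmx_inv | by move=> x [] |].
  move=> j; set e := invmx s *m delta_mx j 0.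
  have hg a : latt s r (a%:R *: e, 0).
    apply/lattE; split; last exact: Zspan0.
    by rewrite /e scalemxAr; apply: Zspan_int; apply: intcol_delta.
  have [a [b [ab [h [[ka [hka ea]] [kb [hkb eb]]]]]]] :=
    pigeon (fun a => hcov _ (hg a)).
  exists (b - a)%N; split; first by rewrite subn_gt0.
  move: ea eb; rewrite /Gmul => ea eb.
  have e2 : h.2 = - ka.2 by apply/eqP; rewrite -subr_eq0 opprK; move: (congr1 snd ea) => /= <-.
  have e1 : (b - a)%:R *: e = Defs.eta D h.2 *m (kb.1 - ka.1).
    rewrite natrB 1?ltnW // scalerBl mulmxBr.
    by move: (congr1 fst eb) (congr1 fst ea) => /= -> ->; rewrite opprD addrACA subrr add0r.
  case: hka => /lattE [ka1 ka2] /lattE [ka3 ka4].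
  case: hkb => /lattE [kb1 kb2] /lattE [kb3 kb4].
  rewrite e1; split.
    apply: (eta_pres h1); first by rewrite e2; apply: ZspanN.
    by apply: ZspanD => //; apply: ZspanN.
  apply: (eta_pres h2); first by rewrite e2; apply: ZspanN.
  by apply: ZspanD => //; apply: ZspanN.
apply: (rank_of (A := r)) => //; first by move=> x [].
move=> j; set e := r *m delta_mx j 0.
have hg a : latt s r (0, a%:R *: e).
  apply/lattE; split; first exact: Zspan0.
  by rewrite /e scalemxAr; apply: Zspan_int; apply: intcol_delta.
have [a [b [ab [h [[ka [hka ea]] [kb [hkb eb]]]]]]] :=
  pigeon (fun a => hcov _ (hg a)).
exists (b - a)%N; split; first by rewrite subn_gt0.
move: ea eb; rewrite /Gmul => ea eb.
have e1 : (b - a)%:R *: e = kb.2 - ka.2.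
  rewrite natrB 1?ltnW // scalerBl.
  by move: (congr1 snd eb) (congr1 snd ea) => /= -> ->; rewrite opprD addrACA subrr add0r.
case: hka => /lattE [ka1 ka2] /lattE [ka3 ka4].
case: hkb => /lattE [kb1 kb2] /lattE [kb3 kb4].
rewrite e1; split; by apply: ZspanD => //; apply: ZspanN.
Qed.

End Fwd.

Section Bwd.
Variable R : realType.

Lemma divmod (N : nat) (x : R) : (0 < N)%N -> x \is a Num.int ->
  exists q : R, q \is a Num.int /\ exists r : 'I_N, x = N%:R * q + (r : nat)%:R.
Proof.
move=> hN hx; set z := Num.floor x.
have hz : x = z%:~R by rewrite floorK.
have m0 : (0 <= (z %% N)%Z) by apply: modz_ge0; rewrite -lt0n.
have m1 : ((z %% N)%Z < N) by apply: ltz_pmod; rewrite ltz_nat.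
have hr : (`|(z %% N)%Z| < N)%N by lia.
exists ((z %/ N)%Z)%:~R; split; first exact: intr_int.
exists (Ordinal hr) => /=.
rewrite hz {1}(divz_eq z N) intrD intrM mulrC -[in LHS](gez0_abs m0).
by [].
Qed.

Lemma vdivmod k (N : nat) (v : 'cV[R]_k) : (0 < N)%N -> intcol v ->
  exists w, intcol w /\ exists rr : 'I_k -> 'I_N,
    v = N%:R *: w + \col_i ((rr i : nat)%:R).
Proof.
move=> hN hv.
have h i : exists qr : R * 'I_N, qr.1 \is a Num.int /\ v i 0 = N%:R * qr.1 + (qr.2 : nat)%:R.
  by have [q [hq [r e]]] := divmod hN (hv i); exists (q, r).
have [F hF] := boolp.choice h.
exists (\col_i (F i).1); split; first by move=> i; rewrite mxE; case: (hF i).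
exists (fun i => (F i).2); apply/matrixP => i j; rewrite (ord1 j) !mxE.
by case: (hF i).
Qed.

Lemma fi_mono n m (D : 'M[R]_(m, n)) G H H' :
  finite_index D G H -> (forall k, H k -> H' k) -> finite_index D G H'.
Proof.
move=> [s [hs hc]] hH; exists s; split => // g /hc [h hh [k [hk e]]].
by exists h => //; exists k; split => //; apply: hH.
Qed.

Definition col_of k M (f : 'I_k -> 'I_M) : 'cV[R]_k := \col_i ((f i : nat)%:R).

Lemma col_of_int k M (f : 'I_k -> 'I_M) : intcol (col_of f).
Proof. by move=> i; rewrite mxE natr_int. Qed.

Lemma FI n m (D : 'M[R]_(m, n)) s r (N N' : nat) (S1 : set 'cV[R]_n) (S2 : set 'cV[R]_m) :
  compatible D s r -> (0 < N)%N -> (0 < N')%N ->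
  (forall x, intcol x -> S1 (N%:R *: (invmx s *m x))) ->
  (forall p, intcol p -> S2 (N'%:R *: (r *m p))) ->
  finite_index D (latt s r) [set k | S1 k.1 /\ S2 k.2].
Proof.
move=> hc hN hN' h1 h2; have hs : s \in unitmx by case: hc.
pose T : finType := ({ffun 'I_m -> 'I_N'} * {ffun 'I_n -> 'I_N})%type.
pose rep (x : T) := (Defs.eta D (r *m col_of x.1) *m invmx s *m col_of x.2,
                     r *m col_of x.1).
exists (map rep (enum T)); split.
  move=> h /mapP [x _ ->]; apply/lattE; split => /=; last exact: Zspan_int (col_of_int _).
  exists (cnj D s (r *m col_of x.1) *m col_of x.2); split.
    apply/intcolP; apply: intmxM; last by apply/intcolP; apply: col_of_int.
    by case: (conj_int hc (col_of_int x.1)).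
  by rewrite /cnj !mulmxA mulVmx // mul1mx.
case=> g1 g2 /lattE [[v [hv /= ->]] [p [hp /= ->]]].
have [q [hq [pf ep]]] := vdivmod hN' hp.
have e1 : col_of [ffun i => pf i] = col_of pf by apply/matrixP => i j; rewrite !mxE ffunE.
set p' := col_of pf in e1.
have [hU1 hU2] := conj_int hc (col_of_int pf).
set U := cnj D s (- (r *m p')) in hU2.
have hy : intcol (U *m v) by apply/intcolP; apply: intmxM => //; apply/intcolP.
have [w [hw [rf ey]]] := vdivmod hN hy.
have e2 : col_of [ffun i => rf i] = col_of rf by apply/matrixP => i j; rewrite !mxE ffunE.
exists (rep ([ffun i => pf i], [ffun i => rf i])).
  by apply: map_f; rewrite mem_enum.
exists (N%:R *: (invmx s *m w), N'%:R *: (r *m q)); split; first by split; [apply: h1 | apply: h2].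
rewrite /Gmul /rep /= e1 e2; congr pair; last first.
  by rewrite ep mulmxDr scalemxAr addrC.
have key : Defs.eta D (r *m p') *m invmx s *m U = invmx s.
  rewrite /U /cnj !mulmxA -[_ *m invmx s *m s]mulmxA mulVmx // mulmx1.
  by rewrite -etaD subrr eta0 mul1mx.
rewrite -!mulmxA scalemxAr -!mulmxDr [col_of rf + _]addrC -ey.
rewrite [RHS]mulmxA [RHS]mulmxA.
exact: (esym (congr1 (fun M => M *m v) key)).
Qed.

End Bwd.

Lemma bwd (R : realType) n m (D : 'M[R]_(m, n)) s nu r vr :
  compatible D s r -> compatible D nu vr ->
  Zrank (Zspan (invmx s) `&` Zspan (invmx nu)) n ->
  Zrank (Zspan r `&` Zspan vr) m ->
  commensurable D (latt s r) (latt nu vr).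
Proof.
move=> h1 h2 [[f [hf hi]] _] [[g [hg hj]] _].
have [N1 [hN1 e1]] := full hf hi.
have hf' : forall i, (Zspan (invmx nu) `&` Zspan (invmx s)) (f i).
  by move=> i; case: (hf i) => a b; split.
have [N1' [hN1' e1']] := full hf' hi.
have [N2 [hN2 e2]] := full hg hj.
have hg' : forall i, (Zspan vr `&` Zspan r) (g i).
  by move=> i; case: (hg i) => a b; split.
have [N2' [hN2' e2']] := full hg' hj.
split.
  apply: (fi_mono (FI h1 hN1 hN2 e1 e2)) => k [[a b] [c d]].
  by split; apply/lattE.
apply: (fi_mono (FI h2 hN1' hN2' e1' e2')) => k [[a b] [c d]].
by split; apply/lattE.
Qed.

Theorem mainTheorem3 (R : realType) (n m : nat) (D : 'M[R]_(m, n))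
  (hm : (1 <= m)%N) (hmn : (m <= n)%N)
  (hindep : forall c : 'cV[R]_m, \sum_(i < m) c i 0 *: Delta D i = 0 -> c = 0)
  (hnonsing : forall i, Delta D i \in unitmx)
  (htrace : forall i, \tr (Delta D i) = 0)
  (hdistinct : forall (i : 'I_m) (k j : 'I_n), k != j -> D i k != D i j)
  (sigma nu : 'M[R]_n) (rho vrho : 'M[R]_m)
  (hc1 : compatible D sigma rho) (hc2 : compatible D nu vrho) :
  commensurable D (latt sigma rho) (latt nu vrho) <->
  (Zrank (Zspan (invmx sigma) `&` Zspan (invmx nu)) n /\
   Zrank (Zspan rho `&` Zspan vrho) m).
Proof.
split; first by move=> [h _]; exact: (fwd hc1 hc2 h).
by move=> [a b]; exact: (bwd hc1 hc2 a b).
Qed.
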